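(* Consider $n$ scalar states $x_i(t)\in\mathbb{R}$, $t\in\mathbb{Z}_{\ge0}$, updated synchronously by $$x_i(t+1)=x_i(t)+\frac{1}{1+n_i}\sum_{j\in\mathcal{N}_i}\big(x_j(t-T_{ji})-x_i(t)\big),\qquad i=1,\dots,n,$$ where the neighbor sets $\mathcal{N}_i$ are fixed, the neighbor relation is symmetric ($j\in\mathcal{N}_i\iff i\in\mathcal{N}_j$), the resulting undirected graph is connected, $n_i=|\mathcal{N}_i|\ge1$, and the delays $T_{ji}\in\mathbb{Z}_{\ge0}$ are constant (possibly different for different links and for the two directions of a link), with arbitrary initial values $x_i(s)$ for $s\le 0$. Then, regardless of the values of the delays, $x_i(t)-x_j(t)\to0$ as $t\to\infty$ for all $i,j$. *)

(* Defs.v *)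
From HB Require Import structures.
From mathcomp Require Import all_boot all_order all_algebra.
From mathcomp Require Import all_classical all_reals all_analysis.
Set Implicit Arguments. Unset Strict Implicit. Unset Printing Implicit Defensive.
Import Order.TTheory GRing.Theory Num.Theory.
Local Open Scope ring_scope.

Definition nbr_count (n : nat) (e : rel 'I_n) (i : 'I_n) : nat :=
  #|[pred j | e i j]|.

(* The delayed consensus update, for every time t >= 0 (time is an integer,
   values at times s <= 0 are arbitrary initial values):
   x_i(t+1) = x_i(t) + 1/(1+n_i) * sum_{j in N_i} (x_j(t - T_ji) - x_i(t)). *)
Definition delayed_consensus (R : realType) (n : nat) (e : rel 'I_n)
  (T : 'I_n -> 'I_n -> nat) (x : 'I_n -> int -> R) : Prop :=
  forall (i : 'I_n) (t : nat),
    x i (t%:Z + 1) =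
      x i t%:Z + (1 + (nbr_count e i)%:R)^-1 *
        \sum_(j | e i j) (x j (t%:Z - (T j i)%:Z) - x i t%:Z).

(* Main.v *)
Require Import Defs.
From HB Require Import structures.
From mathcomp Require Import all_boot all_order all_algebra.
From mathcomp Require Import all_classical all_reals all_analysis.
From mathcomp Require Import ring lra zify.
Import Order.TTheory GRing.Theory Num.Theory.
Local Open Scope ring_scope.
Local Open Scope ring_scope.
Section Cons.
Variables (R : realType) (n : nat) (e : rel 'I_n) (T : 'I_n -> 'I_n -> nat).
Variable D : nat.
Hypothesis hD : forall i j, (T i j <= D)%N.

Definition qq i : R := (1 + (nbr_count e i)%:R)^-1.

Lemma qq_gt0 i : 0 < qq i.
Proof. by rewrite /qq invr_gt0 ltr_wpDr. Qed.

Definition qm : R := (1 + n%:R)^-1.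

Lemma qm_gt0 : 0 < qm.
Proof. by rewrite /qm invr_gt0 ltr_wpDr. Qed.

Lemma qm_le1 : qm <= 1.
Proof. by rewrite /qm invf_le1 ?ler_wpDr ?ltr_wpDr. Qed.

Lemma qm_le i : qm <= qq i.
Proof.
rewrite /qm /qq lef_pV2 ?posrE ?ltr_wpDr // lerD2l ler_nat.
by rewrite /nbr_count (leq_trans (max_card _)) ?card_ord.
Qed.

Lemma step_id x (hx : delayed_consensus e T x) c i (t : nat) :
  x i (t%:Z + 1) - c = qq i * ((x i t%:Z - c) +
     \sum_(j | e i j) (x j (t%:Z - (T j i)%:Z) - c)).
Proof.
rewrite hx /qq.
have -> : \sum_(j | e i j) (x j (t%:Z - (T j i)%:Z) - x i t%:Z) =
   \sum_(j | e i j) (x j (t%:Z - (T j i)%:Z) - c) - \sum_(j | e i j) (x i t%:Z - c).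
  rewrite -sumrB; apply: eq_bigr => j _; ring.
rewrite sumr_const /nbr_count.
set S := \sum_(j | _) _. set N := #|_|.
have hN : (1 + N%:R : R) != 0 by rewrite lt0r_neq0 // ltr_pwDl.
rewrite -mulr_natr. field. done.
Qed.

Definition wlb (x : 'I_n -> int -> R) c (t : nat) :=
  forall i (k : nat), (k <= D)%N -> c <= x i (t%:Z - k%:Z).

Lemma wlb_mono x (hx : delayed_consensus e T x) c t0 :
  wlb x c t0 -> forall d, wlb x c (t0 + d).
Proof.
move=> H0; elim=> [|d IH]; first by rewrite addn0.
move=> i [|k] hk.
- have -> : ((t0 + d.+1)%:Z - 0%:Z) = (t0 + d)%N%:Z + 1 by lia.
  rewrite -subr_ge0 step_id // mulr_ge0 ?(ltW (qq_gt0 _)) // addr_ge0 //.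
    by rewrite subr_ge0 (_ : (t0 + d)%N%:Z = (t0 + d)%N%:Z - 0%:Z) ?IH //; lia.
  by apply: sumr_ge0 => j _; rewrite subr_ge0 IH.
- have -> : ((t0 + d.+1)%:Z - k.+1%:Z) = (t0 + d)%N%:Z - k%:Z by lia.
  by apply: IH; apply: ltnW.
Qed.

Lemma wlb_pt x (hx : delayed_consensus e T x) c t0 :
  wlb x c t0 -> forall i (s : nat), (t0 <= s)%N -> c <= x i s%:Z.
Proof.
move=> H i s hs; have := wlb_mono x hx c t0 H (s - t0) i 0 (leq0n D).
by rewrite subnKC // subr0.
Qed.

Section Spread.
Variables (x : 'I_n -> int -> R) (hx : delayed_consensus e T x).
Variables (c : R) (t0 : nat) (i0 : 'I_n).
Hypothesis H0 : wlb x c t0.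
Let h := x i0 t0%:Z - c.

Definition good k i := forall s : nat, (t0 + k * D.+1 <= s)%N ->
  h * qm ^+ (s - t0) <= x i s%:Z - c.

Lemma good0 : good 0 i0.
Proof.
move=> s; rewrite mul0n addn0 => hs.
have hh : 0 <= h by rewrite /h subr_ge0 (wlb_pt x hx c t0 H0).
rewrite -(subnKC hs); elim: (s - t0)%N => [|d IH].
  by rewrite addn0 subnn expr0 mulr1.
rewrite addnS; have -> : (t0 + d).+1%:Z = (t0 + d)%N%:Z + 1 by lia.
have -> : ((t0 + d).+1 - t0)%N = d.+1 by lia.
rewrite step_id // exprS mulrCA.
apply: ler_pM; first by rewrite ltW ?qm_gt0.
- by rewrite mulr_ge0 // exprn_ge0 // ltW ?qm_gt0.
- exact: qm_le.
rewrite -[X in X <= _]addr0 lerD //; first by rewrite addKn in IH.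
apply: sumr_ge0 => j _; rewrite subr_ge0.
have := wlb_mono x hx c t0 H0 d j (T j i0) (hD j i0); by [].
Qed.
Lemma h_ge0 : 0 <= h.
Proof. by rewrite /h subr_ge0 (wlb_pt x hx c t0 H0). Qed.

Lemma good_step k a b : e b a -> good k a -> good k.+1 b.
Proof.
move=> eba ga s hs.
have hs1 : (0 < s)%N by move: hs; rewrite mulSn; lia.
have hTab := hD a b.
set s1 := s.-1. set s' := (s1 - T a b)%N.
have es : s%:Z = s1%:Z + 1 by rewrite /s1; lia.
have es' : s1%:Z - (T a b)%:Z = s'%:Z by rewrite /s'; move: hs; rewrite mulSn /s1; lia.
have hs' : (t0 + k * D.+1 <= s')%N by move: hs; rewrite /s' /s1 mulSn; lia.
rewrite es step_id //.
have hsub : (s - t0 = (s1 - t0).+1)%N by rewrite /s1; move: hs; lia.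
rewrite hsub exprS mulrCA.
have hqk : qm ^+ (s1 - t0) <= qm ^+ (s' - t0).
  by apply: ler_wiXn2l; [exact: ltW qm_gt0 | exact: qm_le1 | rewrite /s'; lia].
apply: ler_pM; first by rewrite ltW ?qm_gt0.
- by rewrite mulr_ge0 ?h_ge0 // exprn_ge0 // ltW ?qm_gt0.
- exact: qm_le.
apply: le_trans (_ : x a s'%:Z - c <= _).
  by apply: le_trans (ga s' hs'); rewrite ler_wpM2l ?h_ge0.
rewrite -[X in X <= _]add0r lerD //.
  by rewrite subr_ge0 (wlb_pt x hx c t0 H0) // /s1; move: hs; lia.
rewrite (bigD1 a) //= -es' -[X in X <= _]addr0 lerD //.
apply: sumr_ge0 => j _; rewrite subr_ge0.
have := wlb_mono x hx c t0 H0 (s1 - t0) j (T j b) (hD j b).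
by rewrite subnKC // /s1; move: hs; lia.
Qed.

Lemma good_mono k k' i : (k <= k')%N -> good k i -> good k' i.
Proof.
move=> hk g s hs; apply: g; apply: leq_trans hs.
by rewrite leq_add2l leq_mul2r hk orbT.
Qed.

Hypothesis e_sym : symmetric e.

Lemma good_path p a k : path e a p -> good k a -> good (k + size p) (last a p).
Proof.
elim: p a k => [|b p IH] a k /=; first by rewrite addn0.
move=> /andP[eab pp] ga; rewrite addnS -addSn; apply: IH => //.
by apply: good_step ga; rewrite e_sym.
Qed.

Lemma good_all j : connect e i0 j -> good n j.
Proof.
move=> /connectP[p pp ->]; case: (shortenP pp) => p' pp' up' _.
have G := @good_path p' i0 0 pp' good0. apply: (good_mono (0 + size p') n (last i0 p') _ G).
have := uniq_leq_size up' (fun z _ => mem_enum ('I_n) z).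
rewrite /= size_enum_ord. lia.
Qed.
End Spread.
Hypothesis e_sym : symmetric e.
Hypothesis e_conn : forall i j : 'I_n, connect e i j.
Variable i0 : 'I_n.

Definition mw (x : 'I_n -> int -> R) (t : nat) : R :=
  \big[Order.min/x i0 t%:Z]_(p : 'I_n * 'I_D.+1) x p.1 (t%:Z - (p.2 : nat)%:Z).
Definition negx (x : 'I_n -> int -> R) := fun i s => - x i s.
Definition Mw x t := - mw (negx x) t.

Lemma negxK x : negx (negx x) = x.
Proof. by apply: funext => i; apply: funext => s; rewrite /negx opprK. Qed.

Lemma neg_cons x : delayed_consensus e T x -> delayed_consensus e T (negx x).
Proof.
move=> hx i t; rewrite /negx hx opprD; congr (_ + _).
by rewrite -mulrN -sumrN; congr (_ * _); apply: eq_bigr => j _; rewrite opprB opprK addrC.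
Qed.

Lemma mw_wlb x t : wlb x (mw x t) t.
Proof.
move=> i k hk; exact: (bigmin_le _ (i, Ordinal (hk : (k < D.+1)%N))).
Qed.

Lemma mw_le x t i k : (k <= D)%N -> mw x t <= x i (t%:Z - k%:Z).
Proof. exact: mw_wlb. Qed.

Lemma Mw_ge x t i k : (k <= D)%N -> x i (t%:Z - k%:Z) <= Mw x t.
Proof. by move=> hk; rewrite /Mw lerNr; apply: (mw_le (negx x)). Qed.

Lemma mw_ge x c t : wlb x c t -> c <= mw x t.
Proof.
move=> H; apply: le_bigmin; first by have := H i0 0 (leq0n _); rewrite subr0.
by move=> [i k] _; apply: H; rewrite -ltnS.
Qed.

Lemma mw_mono x (hx : delayed_consensus e T x) t d : mw x t <= mw x (t + d).
Proof. by apply: mw_ge; apply: wlb_mono => //; apply: mw_wlb. Qed.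

Lemma Mw_mono x (hx : delayed_consensus e T x) t d : Mw x (t + d) <= Mw x t.
Proof. by rewrite /Mw lerN2; apply: mw_mono; apply: neg_cons. Qed.

Lemma mw_negx x t : mw (negx x) t = - Mw x t.
Proof. by rewrite /Mw opprK. Qed.
Lemma Mw_negx x t : Mw (negx x) t = - mw x t.
Proof. by rewrite /Mw negxK. Qed.

Let K := (n * D.+1 + D)%N.

Lemma lower_gain x (hx : delayed_consensus e T x) t0 :
  (Mw x t0 - mw x t0) / 2 <= x i0 t0%:Z - mw x t0 ->
  mw x t0 + (Mw x t0 - mw x t0) / 2 * qm ^+ K <= mw x (t0 + K).
Proof.
move=> hh.
have G := fun j => @good_all x hx (mw x t0) t0 i0 (mw_wlb x t0) e_sym j (e_conn i0 j).
apply: mw_ge => i k hk.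
have := G i (t0 + K - k)%N; rewrite /K.
have -> : (t0 + (n * D.+1 + D))%N%:Z - k%:Z = (t0 + (n * D.+1 + D) - k)%N%:Z by lia.
move=> /(_ ltac:(lia)) H; rewrite -lerBrDl; apply: le_trans H.
have dge : 0 <= (Mw x t0 - mw x t0) / 2.
  by rewrite divr_ge0 // subr_ge0 (le_trans (mw_le x t0 i0 0 (leq0n D)) (Mw_ge x t0 i0 0 (leq0n D))).
apply: ler_pM => //; first by rewrite exprn_ge0 // ltW ?qm_gt0.
apply: ler_wiXn2l; [exact: ltW qm_gt0 | exact: qm_le1 | lia].
Qed.

Lemma dcontract x (hx : delayed_consensus e T x) t0 :
  Mw x (t0 + K) - mw x (t0 + K) <= (1 - qm ^+ K / 2) * (Mw x t0 - mw x t0).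
Proof.
have hm := mw_mono x hx t0 K; have hM := Mw_mono x hx t0 K.
case: (lerP ((Mw x t0 - mw x t0) / 2) (x i0 t0%:Z - mw x t0)) => hc.
  have := lower_gain x hx t0 hc.
  set Q := qm ^+ K; set m := mw x t0; set M := Mw x t0.
  move: hM; set M' := Mw x _; set m' := mw x _ => hM h1.
  have E : (1 - Q / 2) * (M - m) = M - (m + (M - m) / 2 * Q) by ring.
  rewrite E; lra.
have hc' : (Mw (negx x) t0 - mw (negx x) t0) / 2 <= negx x i0 t0%:Z - mw (negx x) t0.
  rewrite Mw_negx mw_negx /negx; lra.
have := lower_gain (negx x) (neg_cons x hx) t0 hc'.
rewrite !Mw_negx !mw_negx.
set Q := qm ^+ K; set m := mw x t0; set M := Mw x t0.
move: hm; set M' := Mw x (t0 + K); set m' := mw x (t0 + K) => hm h1.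
have E : (1 - Q / 2) * (M - m) = (M - (M - m) / 2 * Q) - m by ring.
have E2 : - M + (- m - - M) / 2 * Q = - (M - (M - m) / 2 * Q) by ring.
rewrite E2 lerN2 in h1; rewrite E; move: h1; set P := (M - m) / 2 * Q => h1'; rewrite -/m in hm; lra.
Qed.
End Cons.

Local Open Scope classical_set_scope.
Theorem theorem5 (R : realType) (n : nat) (e : rel 'I_n)
  (T : 'I_n -> 'I_n -> nat) (x : 'I_n -> int -> R)
  (e_sym : symmetric e) (e_irr : irreflexive e)
  (e_conn : forall i j : 'I_n, connect e i j)
  (e_deg : forall i : 'I_n, (0 < nbr_count e i)%N)
  (hx : delayed_consensus e T x) :
  forall i j : 'I_n, (fun t : nat => x i t%:Z - x j t%:Z : R) @ \oo --> 0.
Proof.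
move=> i j.
pose D := (\max_(p : 'I_n * 'I_n) T p.1 p.2)%N.
have hD : forall a b, (T a b <= D)%N.
  by move=> a b; exact: (@leq_bigmax _ (fun p : 'I_n * 'I_n => T p.1 p.2) (a, b)).
pose K := (n * D.+1 + D)%N.
pose d t := Mw R n D i x t - mw R n D i x t.
pose eta : R := qm R n ^+ K / 2.
have Qge : 0 <= qm R n ^+ K by rewrite exprn_ge0 // ltW ?qm_gt0.
have Qle : qm R n ^+ K <= 1 by rewrite exprn_ile1 ?qm_le1 // ltW ?qm_gt0.
have Qgt : 0 < qm R n ^+ K by rewrite exprn_gt0 ?qm_gt0.
have z0 : 0 <= 1 - eta by rewrite /eta; lra.
have z1 : 1 - eta < 1 by rewrite /eta; lra.
have dmono : forall t t', (t <= t')%N -> d t' <= d t.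
  move=> t t' htt; rewrite /d -(subnKC htt); apply: lerB.
    exact: Mw_mono.
  exact: mw_mono.
have dge : forall t, 0 <= d t.
  move=> t; rewrite /d subr_ge0; apply: le_trans (Mw_ge R n D i x t i 0 (leq0n _)).
  exact: mw_le.
have dK : forall N, d (N * K)%N <= (1 - eta) ^+ N * d 0%N.
  elim=> [|N IH]; first by rewrite mul0n expr0 mul1r.
  rewrite mulSn addnC exprS -mulrA.
  have H := @dcontract R n e T D hD e_sym e_conn i x hx (N * K)%N.
  apply: le_trans H _.
  by rewrite -/K -/eta ler_wpM2l.
have bnd : forall t, `|x i t%:Z - x j t%:Z| <= d t.
  move=> t; have := mw_le R n D i x t i 0 (leq0n _); have := mw_le R n D i x t j 0 (leq0n _).
  have := Mw_ge R n D i x t i 0 (leq0n _); have := Mw_ge R n D i x t j 0 (leq0n _).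
  rewrite subr0 /d => h1 h2 h3 h4; rewrite ler_norml; apply/andP; split; lra.
have hc : (fun N : nat => (1 - eta) ^+ N * d 0%N : R) @ \oo --> 0.
  rewrite -(mul0r (d 0%N)); apply: cvgMl; apply: cvg_expr; rewrite ger0_norm //.
apply/cvgrPdist_le => eps eps0.
move/cvgrPdist_le: hc => /(_ eps eps0) [N _ HN].
apply: filterS (nbhs_infty_ge (N * K)) => t ht.
have := HN N (leqnn N); rewrite sub0r normrN ger0_norm ?mulr_ge0 ?exprn_ge0 //.
move=> hN; rewrite sub0r normrN.
apply: le_trans (bnd t) _; apply: le_trans (dmono _ _ ht) _.
exact: le_trans (dK N) hN.
Qed.
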